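(* Let $R$ be a commutative domain over $\mathbb{C}$, $m\ge1$, and $c(t)\in R[t]$. Consider the endomorphisms of $R(z_1,\dots,z_m)$ $$\sum_{r=1}^m\frac{c(z_r)}{\prod_{1\le s\le m,\,s\ne r}(z_r-z_s)}\,\beta_r \qquad\text{and}\qquad \partial_{m-1}\cdots\partial_1\,c(z_1)\,\beta_1 .$$ Applied to any element of $R(z_1,\dots,z_m)^{\Sigma_m}$ these two operators agree. In particular, both preserve $R[z_1,\dots,z_m]^{\Sigma_m}$.
   Context: $R(z_1,\dots,z_m)$ is the field of fractions of $R[z_1,\dots,z_m]$, with $\Sigma_m$ permuting the variables. For $1\le r\le m$, $\beta_r$ is the $R$-algebra endomorphism with $\beta_r(z_s)=z_s+2\delta_{r,s}$. For $1\le r<m$, $\partial_r=\frac{1}{z_{r+1}-z_r}(s_r-1)$, where $s_r$ is the $R$-algebra automorphism swapping $z_r$ and $z_{r+1}$. Polynomials such as $c(z_1)$ act by multiplication; operators are composed right to left. *)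

(* Defs.v *)
From HB Require Import structures.
From mathcomp Require Import all_boot all_order all_algebra all_fingroup.
From mathcomp Require Import algC.
From mathcomp Require Import mpoly.
From mathcomp Require Import generic_quotient fraction.
Set Implicit Arguments. Unset Strict Implicit. Unset Printing Implicit Defensive.
Import Order.TTheory GRing.Theory Num.Theory.
Local Open Scope ring_scope.
Local Open Scope quotient_scope.

Notation "x %:F" := (@FracField.tofrac _ x) : ring_scope.

Section Ops.
Context (R : idomainType) (n : nat).
Local Notation P := {mpoly R[n]}.
Local Notation K := {fraction P}.

(* Extension of a (injective) ring endomorphism f of R[z] to the fraction
   field: x = a/b  |->  f a / f b (computed on the chosen representative). *)
Definition fracmap (f : P -> P) (x : K) : K :=
  let r := repr x in (f \n_r)%:F / (f \d_r)%:F.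

Definition zF (i : 'I_n) : K := ('X_i : P)%:F.

Definition cz (c : {poly R}) (i : 'I_n) : K :=
  ((map_poly (@mpolyC n R) c).['X_i] : P)%:F.

Definition beta_poly (r : 'I_n) (p : P) : P :=
  p \mPo [tuple ('X_i + (if i == r then 2%:R else 0)) | i < n].
Definition beta (r : 'I_n) : K -> K := fracmap (beta_poly r).

Definition permF (s : 'S_n) : K -> K := fracmap (msym s).

Definition ddiff (i j : 'I_n) (x : K) : K :=
  (zF j - zF i)^-1 * (permF (tperm i j) x - x).

Definition frac_symmetric (x : K) : Prop := forall s : 'S_n, permF s x = x.

(* nat index -> ordinal (only used for indices < n) *)
Definition idx (z0 : 'I_n) (k : nat) : 'I_n := insubd z0 k.

Definition op1 (c : {poly R}) (x : K) : K :=
  \sum_(r < n) (cz c r / \prod_(s < n | s != r) (zF r - zF s)) * beta r x.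

(* partial_{n-1} ... partial_1 c(z_1) beta_1  (0-based indices;
   partial_k swaps z_{k-1}, z_k; partial_1 applied first) *)
Definition op2 (z0 : 'I_n) (c : {poly R}) (x : K) : K :=
  foldl (fun y k => ddiff (idx z0 k) (idx z0 k.+1) y)
        (cz c (idx z0 0) * beta (idx z0 0) x) (iota 0 n.-1).

End Ops.

(* Main.v *)
Require Import Defs.
From HB Require Import structures.
From mathcomp Require Import all_boot all_order all_algebra all_fingroup.
From mathcomp Require Import algC.
From mathcomp Require Import mpoly.
From mathcomp Require Import generic_quotient fraction.
From mathcomp Require Import ring zify.
Import Order.TTheory GRing.Theory Num.Theory.
Local Open Scope ring_scope.
Local Open Scope quotient_scope.
Set Implicit Arguments. Unset Strict Implicit. Unset Printing Implicit Defensive.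

Lemma frac_repr (T : idomainType) (x : {fraction T}) :
  x = (\n_(repr x))%:F / (\d_(repr x))%:F.
Proof.
have hd := denom_ratioP (repr x).
apply/(@mulIf _ (\d_(repr x))%:F); first by rewrite tofrac_eq0.
rewrite mulfVK ?tofrac_eq0 //.
rewrite -{1}[x]reprK.
set r := repr x.
unlock tofrac.
have -> : forall a b : {fraction T}, a * b = FracField.mul a b by [].
rewrite -FracField.pi_mul.
apply/eqmodP; rewrite /= FracField.equivfE /=.
rewrite !numden_Ratio ?mulf_neq0 ?oner_neq0 //.
by rewrite !mulr1 mulrC.
Qed.

Section Gen.
Context (R : idomainType) (n : nat).
Local Notation P := {mpoly R[n]}.
Local Notation K := {fraction P}.

Lemma frac_ex (x : K) : exists a b : P, b != 0 /\ x = a%:F / b%:F.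
Proof. exists (\n_(repr x)), (\d_(repr x)); split; [exact: denom_ratioP | exact: (@frac_repr _ x)]. Qed.

Section FM.
Variable f : {rmorphism P -> P}.
Hypothesis finj : injective f.

Lemma f_neq0 b : b != 0 -> f b != 0.
Proof. by move=> b0; apply: contra b0 => /eqP h; apply/eqP; apply: finj; rewrite h rmorph0. Qed.

Lemma fracmapE a b : b != 0 -> fracmap f (a%:F / b%:F) = (f a)%:F / (f b)%:F.
Proof.
move=> b0; rewrite /fracmap.
set r := repr _.
have e := @frac_repr _ (a%:F / b%:F); rewrite -/r in e.
have d0 : \d_r != 0 := denom_ratioP r.
have /eqP := e; rewrite eqr_div ?tofrac_eq0 // -!tofracM tofrac_eq => /eqP e2.
apply/eqP; rewrite eqr_div ?tofrac_eq0 ?f_neq0 // -!tofracM tofrac_eq.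
by rewrite -!rmorphM e2.
Qed.

Lemma fracmapF a : fracmap f (a%:F) = (f a)%:F.
Proof.
have -> : a%:F = a%:F / 1%:F :> K by rewrite tofrac1 divr1.
by rewrite fracmapE ?oner_neq0 // rmorph1 tofrac1 divr1.
Qed.

Lemma fm0 : fracmap f 0 = 0.
Proof. by rewrite -tofrac0 fracmapF rmorph0 tofrac0. Qed.

Lemma fmD x y : fracmap f (x + y) = fracmap f x + fracmap f y.
Proof.
have [a [b [b0 ->]]] := frac_ex x; have [c [d [d0 ->]]] := frac_ex y.
have -> : a%:F / b%:F + c%:F / d%:F = (a * d + c * b)%:F / (b * d)%:F.
  by rewrite addf_div ?tofrac_eq0 // tofracD !tofracM.
rewrite !fracmapE ?mulf_neq0 // (rmorphD f) !(rmorphM f) tofracD !tofracM.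
by rewrite addf_div ?tofrac_eq0 ?f_neq0.
Qed.

Lemma fmN x : fracmap f (- x) = - fracmap f x.
Proof. by apply/eqP; rewrite -subr_eq0 opprK -fmD addNr fm0. Qed.

Lemma fmB x y : fracmap f (x - y) = fracmap f x - fracmap f y.
Proof. by rewrite fmD fmN. Qed.

Lemma fmM x y : fracmap f (x * y) = fracmap f x * fracmap f y.
Proof.
have [a [b [b0 ->]]] := frac_ex x; have [c [d [d0 ->]]] := frac_ex y.
have -> : a%:F / b%:F * (c%:F / d%:F) = (a * c)%:F / (b * d)%:F.
  by rewrite mulf_div !tofracM.
rewrite !fracmapE ?mulf_neq0 // !(rmorphM f) !tofracM.
by rewrite mulf_div.
Qed.

Lemma fmV x : fracmap f (x^-1) = (fracmap f x)^-1.
Proof.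
have [a [b [b0 ->]]] := frac_ex x.
have [->|a0] := eqVneq a 0; first by rewrite tofrac0 mul0r invr0 fm0 invr0.
rewrite invf_div !fracmapE // invf_div //.
Qed.

Lemma fm_sum I (r : seq I) (Pr : pred I) (F : I -> K) :
  fracmap f (\sum_(i <- r | Pr i) F i) = \sum_(i <- r | Pr i) fracmap f (F i).
Proof. by apply: (big_morph _ fmD fm0). Qed.

Lemma fm1 : fracmap f 1 = 1.
Proof. by rewrite -tofrac1 fracmapF rmorph1 tofrac1. Qed.

Lemma fm_prod I (r : seq I) (Pr : pred I) (F : I -> K) :
  fracmap f (\prod_(i <- r | Pr i) F i) = \prod_(i <- r | Pr i) fracmap f (F i).
Proof. by apply: (big_morph _ fmM fm1). Qed.

End FM.

Lemma hom_eq (f g : P -> P) :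
  (forall c p, f (c *: p) = c *: f p) -> (forall c p, g (c *: p) = c *: g p) ->
  (forall p q, f (p + q) = f p + f q) -> (forall p q, g (p + q) = g p + g q) ->
  (forall p q, f (p * q) = f p * f q) -> (forall p q, g (p * q) = g p * g q) ->
  f 1 = 1 -> g 1 = 1 ->
  (forall i, f 'X_i = g 'X_i) -> f =1 g.
Proof.
move=> fZ gZ fD gD fM gM f1 g1 fX p.
have f0 : f 0 = 0 by have := fZ 0 0; rewrite !scale0r.
have g0 : g 0 = 0 by have := gZ 0 0; rewrite !scale0r.
have fE k x : f (x ^+ k) = f x ^+ k.
  by elim: k => [|k IH]; rewrite ?expr0 // !exprS fM IH.
have gE k x : g (x ^+ k) = g x ^+ k.
  by elim: k => [|k IH]; rewrite ?expr0 // !exprS gM IH.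
rewrite [p]mpolyE (big_morph _ fD f0) (big_morph _ gD g0).
apply: eq_bigr => m _; rewrite fZ gZ; congr (_ *: _).
rewrite mpolyXE_id (big_morph _ fM f1) (big_morph _ gM g1).
by apply: eq_bigr => i _; rewrite fE gE fX.
Qed.

End Gen.

Section Conc.
Context (R : idomainType) (n : nat).
Local Notation P := {mpoly R[n]}.
Local Notation K := {fraction P}.

Lemma X_neq (i j : 'I_n) : i != j -> ('X_i : P) != 'X_j.
Proof.
move=> ij; apply/eqP => e.
have : ('X_i : P)@_U_(j) = (i == j)%:R := @mcoeffXU _ _ i j.
rewrite e mcoeffXU eqxx (negbTE ij) => /eqP.
by rewrite oner_eq0.
Qed.

Lemma zF_neq0 (i j : 'I_n) : i != j -> zF R i - zF R j != 0.
Proof. by move=> ij; rewrite /zF -tofracB tofrac_eq0 subr_eq0 X_neq. Qed.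

Lemma msymXi (s : 'S_n) (i : 'I_n) : msym s ('X_i : P) = 'X_(s i).
Proof. by rewrite /msym mmapX mmap1U. Qed.

Lemma msymC (s : 'S_n) (a : R) : msym s (a%:MP : P) = a%:MP.
Proof. by rewrite /msym mmapC. Qed.

Definition btup (r : 'I_n) : n.-tuple P :=
  [tuple ('X_i + (if i == r then 2%:R else 0)) | i < n].
Definition btupV (r : 'I_n) : n.-tuple P :=
  [tuple ('X_i - (if i == r then 2%:R else 0)) | i < n].

Definition betaR (r : 'I_n) : {rmorphism P -> P} := comp_mpoly (btup r).
Definition betaVR (r : 'I_n) : {rmorphism P -> P} := comp_mpoly (btupV r).
Definition msymR (s : 'S_n) : {rmorphism P -> P} := msym s.

Lemma betaX r i : beta_poly r ('X_i : P) = 'X_i + (if i == r then 2%:R else 0).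
Proof. by rewrite /beta_poly comp_mpolyXU -tnth_nth tnth_mktuple. Qed.

Lemma betaVX r i : comp_mpoly (btupV r) ('X_i : P) = 'X_i - (if i == r then 2%:R else 0).
Proof. by rewrite comp_mpolyXU -tnth_nth tnth_mktuple. Qed.

Lemma beta_inj r : injective (beta_poly (R:=R) (n:=n) r).
Proof.
apply: (can_inj (g := comp_mpoly (btupV r))) => p.
have := @hom_eq R n (comp_mpoly (btupV r) \o beta_poly r) id.
apply => //=.
- by move=> c q; rewrite /beta_poly !comp_mpolyZ.
- by move=> c q; rewrite /beta_poly !comp_mpolyD.
- by move=> c q; rewrite /beta_poly !rmorphM.
- by rewrite /beta_poly !comp_mpoly1.
- move=> i; rewrite betaX comp_mpolyD betaVX.
  case: (i == r); last by rewrite comp_mpoly0 !subr0 addr0.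
  by rewrite (rmorph_nat (betaVR r)) subrK.
Qed.

Lemma msym_inj s : injective (msym (n:=n) (R:=R) s).
Proof.
apply: (can_inj (g := msym s^-1)) => p.
by rewrite -msymMm mulgV msym1m.
Qed.

Lemma msym_beta s r (p : P) : msym s (beta_poly r p) = beta_poly (s r) (msym s p).
Proof.
have := @hom_eq R n (msym s \o beta_poly r) (beta_poly (s r) \o msym s).
apply => //=.
- by move=> c q; rewrite /beta_poly !comp_mpolyZ msymZ.
- by move=> c q; rewrite msymZ /beta_poly comp_mpolyZ.
- by move=> c q; rewrite /beta_poly comp_mpolyD msymD.
- by move=> c q; rewrite msymD /beta_poly comp_mpolyD.
- by move=> c q; rewrite /beta_poly rmorphM msymM.
- by move=> c q; rewrite msymM /beta_poly rmorphM.
- by rewrite /beta_poly comp_mpoly1 msym1.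
- by rewrite msym1 /beta_poly comp_mpoly1.
- move=> i; rewrite betaX msymD msymXi betaX (inj_eq perm_inj).
  case: (i == r); last by rewrite msym0.
  by rewrite (rmorph_nat (msymR s)).
Qed.

Lemma permF_inj s : injective (msymR s). Proof. exact: msym_inj. Qed.
Lemma betaR_inj r : injective (betaR r). Proof. exact: beta_inj. Qed.

Lemma permFE s : permF (R:=R) s = fracmap (msymR s). Proof. by []. Qed.
Lemma betaE r : beta (R:=R) r = fracmap (betaR r). Proof. by []. Qed.

Lemma permF_tofrac s (p : P) : permF s (p%:F) = (msym s p)%:F.
Proof. by rewrite permFE fracmapF //; apply: permF_inj. Qed.

Lemma beta_tofrac r (p : P) : beta r (p%:F) = (beta_poly r p)%:F.
Proof. by rewrite betaE fracmapF //; apply: betaR_inj. Qed.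

Lemma permF_beta s r (x : K) : permF s (beta r x) = beta (s r) (permF s x).
Proof.
have [a [b [b0 ->]]] := @frac_ex R n x.
rewrite !betaE !permFE (fracmapE (betaR_inj (r:=r)) a b0) (fracmapE (permF_inj (s:=s)) a b0).
rewrite (fracmapE (permF_inj (s:=s))) ?(f_neq0 (betaR_inj (r:=r))) //.
rewrite (fracmapE (betaR_inj (r:=s r))) ?(f_neq0 (permF_inj (s:=s))) //.
by rewrite /= !msym_beta.
Qed.

Lemma permF_zF (s : 'S_n) (i : 'I_n) : permF s (zF R i) = zF R (s i).
Proof. by rewrite /zF permF_tofrac msymXi. Qed.

Lemma permF_cz (s : 'S_n) (c : {poly R}) (i : 'I_n) : permF s (cz c i) = cz (R:=R) c (s i).
Proof.
rewrite /cz permF_tofrac; congr (_%:F).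
rewrite -(horner_map (msymR s)) /= msymXi; congr (_.[_]).
rewrite -map_poly_comp; apply: eq_map_poly => a /=; exact: msymC.
Qed.

End Conc.

Lemma L1 (F : fieldType) (w Q u a b B : F) : Q != 0 -> u - a != 0 -> u - b != 0 -> b - a != 0 ->
  w / (Q * (u - a) * (u - b)) * B = (b - a)^-1 * (w / (Q * (u - b)) * B - w / (Q * (u - a)) * B).
Proof. move=> h1 h2 h3 h4; by field; rewrite h1 h2 h3 h4. Qed.

Lemma L2 (F : fieldType) (w w' U U' a b B B' : F) : U != 0 -> U' != 0 -> b - a != 0 ->
  w / (U * (a - b)) * B + w' / (U' * (b - a)) * B' = (b - a)^-1 * (w' / U' * B' - w / U * B).
Proof.
move=> U0 U'0 ba.
have ab : a - b != 0 by rewrite -opprB oppr_eq0.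
by field; rewrite U0 U'0 ba ab.
Qed.

Lemma L3 (F : comRingType) (k X y Z w : F) : k * ((X + y) - (Z + w)) = k * (X - Z) + k * (y - w).
Proof. by ring. Qed.

Section Main.
Context (R : idomainType) (n : nat) (z0 : 'I_n) (c : {poly R}) (x : {fraction {mpoly R[n]}}).
Hypothesis xsym : frac_symmetric x.
Local Notation P := {mpoly R[n]}.
Local Notation K := {fraction P}.

Local Notation I k := (idx z0 k).
Definition g k : K := zF R (I k).
Definition T J r : K := (cz c (I r) / \prod_(0 <= s < J | s != r) (g r - g s)) * beta (I r) x.
Definition S J : K := \sum_(0 <= r < J) T J r.

Lemma valI k : (k < n)%N -> val (I k) = k.
Proof. by move=> kn; rewrite /idx val_insubd kn. Qed.

Lemma I_eq a b : (a < n)%N -> (b < n)%N -> (I a == I b) = (a == b).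
Proof. by move=> an bn; rewrite -val_eqE /= !valI. Qed.

Lemma g_neq a b : (a < n)%N -> (b < n)%N -> a != b -> g a - g b != 0.
Proof. by move=> an bn ab; apply: zF_neq0; rewrite I_eq. Qed.

Lemma prod_neq0 J r : (J <= n)%N -> (r < n)%N -> \prod_(0 <= s < J | s != r) (g r - g s) != 0.
Proof.
move=> Jn rn; rewrite prodf_seq_neq0; apply/allP => s; rewrite mem_iota add0n => /andP [_ sJ].
apply/implyP => sr; apply: g_neq => //; first lia.
by rewrite eq_sym.
Qed.

Lemma prod_neq0' J u : (J <= n)%N -> (u < n)%N -> (J <= u)%N -> \prod_(0 <= s < J) (g u - g s) != 0.
Proof.
move=> Jn un Ju; rewrite prodf_seq_neq0; apply/allP => s; rewrite mem_iota add0n => /andP [_ sJ].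
apply: g_neq => //; first lia.
rewrite neq_ltn; apply/orP; right; lia.
Qed.

Lemma prod_split J r (h : nat -> K) : r != J ->
  \prod_(0 <= s < J.+1 | s != r) h s = (\prod_(0 <= s < J | s != r) h s) * h J.
Proof. by move=> rJ; rewrite big_mkcond big_nat_recr //= -big_mkcond /= eq_sym rJ. Qed.

Lemma prod_triv J r (h : nat -> K) : (J <= r)%N ->
  \prod_(0 <= s < J | s != r) h s = \prod_(0 <= s < J) h s.
Proof.
move=> Jr; rewrite big_seq_cond [RHS]big_seq_cond; apply: eq_bigl => s /=.
rewrite andbT; case: (boolP (s \in _)) => //=; rewrite mem_iota => /andP [_ sJ].
rewrite neq_ltn; apply/orP; left; lia.
Qed.

Lemma prod_excl J (h : nat -> K) :
  \prod_(0 <= s < J.+1 | s != J) h s = \prod_(0 <= s < J) h s.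
Proof.
by rewrite big_mkcond big_nat_recr //= eqxx mulr1 -big_mkcond prod_triv.
Qed.

Lemma tI j r : (j.+1 < n)%N -> (r < n)%N ->
  tperm (I j) (I j.+1) (I r) = I (if r == j then j.+1 else if r == j.+1 then j else r).
Proof.
move=> jn rn.
have [->|rj] := eqVneq r j; first by rewrite tpermL.
have [->|rj1] := eqVneq r j.+1; first by rewrite tpermR.
by rewrite tpermD // I_eq 1?eq_sym //; lia.
Qed.

Lemma permF_T (s : 'S_n) J r : permF s (T J r) =
  (cz c (s (I r)) / \prod_(0 <= k < J | k != r) (zF R (s (I r)) - zF R (s (I k)))) * beta (s (I r)) x.
Proof.
have inj := permF_inj (R:=R) (s:=s).
rewrite /T permFE (fmM inj) (fmM inj) (fmV inj) (fm_prod inj) -!permFE permF_cz permF_beta xsym.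
congr (_ * _ ^-1 * _); apply: eq_bigr => k _.
by rewrite permFE (fmB inj) -permFE !permF_zF.
Qed.

Lemma prod_t j u (Pk : pred nat) : (j.+1 < n)%N ->
  \prod_(0 <= k < j | Pk k) (u - zF R (tperm (I j) (I j.+1) (I k))) = \prod_(0 <= k < j | Pk k) (u - g k).
Proof.
move=> jn; rewrite big_seq_cond [RHS]big_seq_cond; apply: eq_bigr => k /andP [].
rewrite mem_iota => /andP [_ kj] _; rewrite tI; last lia; last lia.
by rewrite ifF ?ifF //; apply/negbTE; rewrite neq_ltn; apply/orP; left; lia.
Qed.

Lemma prod_t' j u : (j.+1 < n)%N ->
  \prod_(0 <= k < j) (u - zF R (tperm (I j) (I j.+1) (I k))) = \prod_(0 <= k < j) (u - g k).
Proof. by move=> jn; have := prod_t u xpredT jn. Qed.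

Lemma step j : (j.+2 <= n)%N -> ddiff (I j) (I j.+1) (S j.+1) = S j.+2.
Proof.
move=> jn.
have jn' : (j.+1 < n)%N by lia.
rewrite /ddiff -[zF R (I j.+1)]/(g j.+1) -[zF R (I j)]/(g j).
rewrite /S permFE (fm_sum (permF_inj (R:=R) (s:=_))) -permFE.
under eq_bigr do rewrite permF_T.
rewrite !big_nat_recr //= L3 -addrA; congr (_ + _).
  rewrite -sumrB mulr_sumr; apply: eq_big_nat => r /andP [_ rj].
  have rn : (r < n)%N by lia.
  rewrite tI // ifF ?ifF; last by apply/negbTE; rewrite neq_ltn; apply/orP; left; lia.
  2: by apply/negbTE; rewrite neq_ltn; apply/orP; left; lia.
  rewrite /T !prod_split; try by rewrite neq_ltn; apply/orP; left; lia.
  rewrite prod_t // tpermL -/(g r) -[zF R (I j.+1)]/(g j.+1).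
  rewrite L1 //.
  - by apply: prod_neq0 => //; lia.
  - by apply: g_neq; lia.
  - by apply: g_neq; lia.
  - by apply: g_neq; lia.
rewrite tpermL /T (prod_excl j (fun k => zF R (I j.+1) - zF R (tperm (I j) (I j.+1) (I k)))) prod_t' //.
rewrite (prod_excl j (fun s => g j - g s)).
rewrite (prod_split (J:=j.+1) (r:=j)); last by rewrite neq_ltn; apply/orP; left; lia.
rewrite (prod_excl j (fun s => g j - g s)).
rewrite (prod_excl j.+1 (fun s => g j.+1 - g s)) big_nat_recr //=.
rewrite -[zF R (I j.+1)]/(g j.+1).
rewrite L2 //.
- by apply: prod_neq0' => //; lia.
- by apply: prod_neq0' => //; lia.
- by apply: g_neq; lia.
Qed.

Lemma fold_S j : (j < n)%N ->
  foldl (fun y k => ddiff (I k) (I k.+1) y) (cz c (I 0) * beta (I 0) x) (iota 0 j) = S j.+1.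
Proof.
elim: j => [|j IH] jn.
  by rewrite /= /S big_nat1 /T big_mkcond big_nat1 /= invr1 mulr1.
have -> : iota 0 j.+1 = iota 0 j ++ [:: j] by rewrite -addn1 iotaD.
rewrite foldl_cat /= IH; last lia.
exact: step.
Qed.

Lemma Iv (r : 'I_n) : I (val r) = r.
Proof. by apply/val_inj; rewrite /= valI. Qed.

Lemma op1_S : op1 c x = S n.
Proof.
rewrite /op1 /S big_mkord; apply: eq_bigr => r _.
rewrite /T big_mkord Iv; congr (_ / _ * _).
by apply: eq_big => [s|s _]; rewrite /g ?Iv.
Qed.

Lemma op12 : (0 < n)%N -> op1 c x = op2 z0 c x.
Proof. by move=> n0; rewrite op1_S /op2 fold_S ?prednK //; lia. Qed.

End Main.

Lemma idD (F : comRingType) (a b u v dl du dv : F) :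
  a - u = dl * du -> b - v = dl * dv -> (a + b) - (u + v) = dl * (du + dv).
Proof.
move=> h1 h2; rewrite -[a](subrK u) h1 -[b](subrK v) h2; ring.
Qed.

Lemma idM (F : comRingType) (a b u v dl du dv : F) :
  a - u = dl * du -> b - v = dl * dv -> a * b - u * v = dl * (a * dv + du * v).
Proof.
move=> h1 h2; rewrite -[a](subrK u) h1 -[b](subrK v) h2; ring.
Qed.

Section Part2.
Context (R : idomainType) (n : nat).
Local Notation P := {mpoly R[n]}.
Local Notation K := {fraction P}.

Lemma dd_div (i j : 'I_n) (q : P) : exists d, msym (tperm i j) q - q = ('X_j - 'X_i) * d.
Proof.
pose D (u : P) := exists d, msym (tperm i j) u - u = ('X_j - 'X_i) * d.
have D0 : D 0 by exists 0; rewrite msym0 subrr mulr0.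
have D1 : D 1 by exists 0; rewrite msym1 subrr mulr0.
have DD u v : D u -> D v -> D (u + v).
  by move=> [du eu] [dv ev]; exists (du + dv); rewrite msymD; apply: idD.
have DM u v : D u -> D v -> D (u * v).
  by move=> [du eu] [dv ev]; exists (msym (tperm i j) u * dv + du * v); rewrite msymM; apply: idM.
have DZ a u : D u -> D (a *: u).
  by move=> [du eu]; exists (a *: du); rewrite msymZ -scalerBr eu scalerAr.
have DX k : D 'X_k.
  rewrite /D msymXi.
  have [->|ki] := eqVneq k i; first by exists 1; rewrite tpermL mulr1.
  have [->|kj] := eqVneq k j; first by exists (-1); rewrite tpermR mulrN1 opprB.
  by exists 0; rewrite tpermD 1?eq_sym // subrr mulr0.
rewrite [q]mpolyE; apply: (big_ind D) => // m _; apply: DZ.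
rewrite mpolyXE_id; apply: (big_ind D) => // k _.
by elim: (m k) => [|e IH]; rewrite ?expr0 // exprS; apply: DM.
Qed.

Lemma ddiff_poly (i j : 'I_n) (q : P) : exists q' : P, ddiff i j (q%:F) = q'%:F.
Proof.
have [->|ij] := eqVneq i j.
  by exists 0; rewrite /ddiff subrr invr0 mul0r tofrac0.
have [d e] := dd_div i j q.
exists d; rewrite /ddiff permF_tofrac.
have -> : (msym (tperm i j) q)%:F - q%:F = (('X_j - 'X_i) * d)%:F :> K by rewrite -e tofracB.
have -> : zF R j - zF R i = ('X_j - 'X_i : P)%:F by rewrite /zF tofracB.
rewrite tofracM mulKf //.
by rewrite tofrac_eq0 subr_eq0 X_neq // eq_sym.
Qed.

Lemma op2_poly (z0 : 'I_n) (c : {poly R}) (p : P) : exists q : P, op2 z0 c (p%:F) = q%:F.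
Proof.
rewrite /op2.
have : exists q0 : P, cz c (idx z0 0) * beta (idx z0 0) p%:F = q0%:F.
  by eexists; rewrite /cz beta_tofrac -tofracM.
elim: (iota 0 n.-1) (cz c (idx z0 0) * beta (idx z0 0) p%:F) => [|k l IH] y [q0 ->] /=.
  by exists q0.
apply: IH; exact: ddiff_poly.
Qed.

Lemma permF_term (c : {poly R}) (x : K) (xsym : frac_symmetric x) (s : 'S_n) (r : 'I_n) :
  permF s ((cz c r / \prod_(k < n | k != r) (zF R r - zF R k)) * beta r x) =
  (cz c (s r) / \prod_(k < n | k != r) (zF R (s r) - zF R (s k))) * beta (s r) x.
Proof.
have inj := permF_inj (R:=R) (s:=s).
rewrite permFE (fmM inj) (fmM inj) (fmV inj) (fm_prod inj) -!permFE permF_cz permF_beta xsym.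
congr (_ * _ ^-1 * _); apply: eq_bigr => k _.
by rewrite permFE (fmB inj) -permFE !permF_zF.
Qed.

Lemma op1_sym (c : {poly R}) (x : K) : frac_symmetric x -> frac_symmetric (op1 c x).
Proof.
move=> xsym s; rewrite /op1 permFE (fm_sum (permF_inj (R:=R) (s:=s))) -permFE.
rewrite [RHS](reindex_inj (@perm_inj _ s)); apply: eq_bigr => r _.
rewrite permF_term //; congr (_ / _ * _).
rewrite [RHS](reindex_inj (@perm_inj _ s)); apply: eq_bigl => k /=.
by rewrite (inj_eq perm_inj).
Qed.

End Part2.

Unset Implicit Arguments.

Theorem lemma4p7 (R : idomainType) (phi : {rmorphism algC -> R})
    (m : nat) (hm : (0 < m)%N) (c : {poly R}) :
  (forall x : {fraction {mpoly R[m]}},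
      frac_symmetric x -> op1 c x = op2 (Ordinal hm) c x) /\
  (forall p : {mpoly R[m]}, p \is symmetric ->
      (exists q : {mpoly R[m]}, q \is symmetric /\ op1 c (p%:F) = q%:F) /\
      (exists q : {mpoly R[m]}, q \is symmetric /\
                                op2 (Ordinal hm) c (p%:F) = q%:F)).
Proof.
split.
  by move=> x xs; apply: op12.
move=> p ps.
have pF : frac_symmetric (p%:F : {fraction {mpoly R[m]}}).
  by move=> s; rewrite permF_tofrac (issymP _ ps).
have [q e] := op2_poly (Ordinal hm) c p.
have e1 : op1 c p%:F = q%:F by rewrite (@op12 R m (Ordinal hm) c p%:F pF hm).
have qs : q \is symmetric.
  apply/issymP => s; apply/eqP; rewrite -tofrac_eq -permF_tofrac -e1.
  by rewrite op1_sym.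
by split; exists q; split.
Qed.
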